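(* Let $\mathcal G$ be a core network with input nodes $\iota_1,\dots,\iota_n$ and output node $o$. The absolutely super-simple nodes of $\mathcal G$ can be uniquely ordered as $\rho_1>\rho_2>\cdots>\rho_p>o$, where $a>b$ means that, for every $m$, $b$ is downstream from $a$ along every $\iota_mo$-simple path (i.e. $b$ appears after $a$ on every such path).
   Context: Node $b$ is downstream from $a$ if there is a directed path from $a$ to $b$. A core network: every node is upstream from $o$ and downstream from at least one input node. A simple path visits each node at most once; an $\iota_mo$-simple path is a simple path from $\iota_m$ to $o$. A node is absolutely super-simple if, for every $m=1,\dots,n$, it lies on every $\iota_mo$-simple path. *)

(* Defs.v *)
From mathcomp Require Import all_boot.
Set Implicit Arguments. Unset Strict Implicit. Unset Printing Implicit Defensive.

Section Network.
Variables (T : finType) (e : rel T).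

Definition downstream (a b : T) : Prop := connect e a b.

Definition core_network (n : nat) (iota : 'I_n -> T) (o : T) : Prop :=
  forall v : T, downstream v o /\ exists m : 'I_n, downstream (iota m) v.

Definition simple_path (a b : T) (p : seq T) : Prop :=
  path e a p /\ last a p = b /\ uniq (a :: p).

Definition abs_super_simple (n : nat) (iota : 'I_n -> T) (o v : T) : Prop :=
  forall (m : 'I_n) (p : seq T), simple_path (iota m) o p -> v \in iota m :: p.

Definition after_on (q : seq T) (a b : T) : Prop :=
  a \in q /\ b \in q /\ index a q < index b q.

Definition ss_gt (n : nat) (iota : 'I_n -> T) (o a b : T) : Prop :=
  forall (m : 'I_n) (p : seq T), simple_path (iota m) o p -> after_on (iota m :: p) a b.

End Network.

(* Main.v *)
From Stdlib Require Import ClassicalEpsilon.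
Require Import Defs.
From mathcomp Require Import all_boot.
Set Implicit Arguments. Unset Strict Implicit. Unset Printing Implicit Defensive.

Lemma last_take_nth (T : eqType) (x : T) p k :
  k <= size p -> last x (take k p) = nth x (x :: p) k.
Proof.
elim: p x k => [|y p IH] x [|k] //= hk.
by rewrite IH // (set_nth_default x).
Qed.

Lemma exists_simple (T : finType) (e : rel T) a b :
  connect e a b -> exists p, simple_path e a b p.
Proof.
move/connectP=> [p hp ->].
case: (shortenP hp) => p' hp' hu _.
by exists p'.
Qed.

Lemma walk (T : finType) (e : rel T) (x1 x2 a b o : T) p1 p2 :
  simple_path e x1 o p1 -> simple_path e x2 o p2 ->
  a \in x1 :: p1 -> a \in x2 :: p2 -> b \in x2 :: p2 ->
  index a (x1 :: p1) < index b (x1 :: p1) ->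
  index b (x2 :: p2) < index a (x2 :: p2) ->
  exists p, simple_path e x1 o p /\ b \notin x1 :: p.
Proof.
move=> [pa1 [l1 u1]] [pa2 [l2 u2]] a1 a2 b2 i1 i2.
have ha1 : nth x1 (x1 :: p1) (index a (x1 :: p1)) = a by apply: nth_index.
have ha2 : nth x2 (x2 :: p2) (index a (x2 :: p2)) = a by apply: nth_index.
have hk1 : index a (x1 :: p1) <= size p1.
  by rewrite -ltnS -[(size p1).+1]/(size (x1 :: p1)) index_mem.
have hk2 : index a (x2 :: p2) <= size p2.
  by rewrite -ltnS -[(size p2).+1]/(size (x2 :: p2)) index_mem.
move: ha1 ha2 hk1 hk2 i1 i2.
set k1 := index a (x1 :: p1); set k2 := index a (x2 :: p2).
move=> ha1 ha2 hk1 hk2 i1 i2.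
have lt1 : last x1 (take k1 p1) = a by rewrite last_take_nth.
have lt2 : last x2 (take k2 p2) = a by rewrite last_take_nth.
move: pa1; rewrite -(cat_take_drop k1 p1) cat_path => /andP[pt1 _].
move: pa2; rewrite -(cat_take_drop k2 p2) cat_path lt2 => /andP[_ pd2].
have hpw : path e x1 (take k1 p1 ++ drop k2 p2) by rewrite cat_path pt1 lt1.
have hlw : last x1 (take k1 p1 ++ drop k2 p2) = o.
  by rewrite last_cat lt1 -lt2 -last_cat cat_take_drop.
have hb : b \notin x1 :: (take k1 p1 ++ drop k2 p2).
  rewrite -cat_cons -/(take k1.+1 (x1 :: p1)) mem_cat negb_or; apply/andP; split.
    apply/negP=> hb.
    have hb1 : b \in x1 :: p1 := mem_take hb.
    by move: hb; rewrite in_take // ltnNge i1.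
  have hbt : b \in take k2.+1 (x2 :: p2) by rewrite in_take // ltnS ltnW.
  move: u2; rewrite -(cat_take_drop k2.+1 (x2 :: p2)) cat_uniq => /and3P[_ hh _].
  apply/negP=> hd; move/hasP: hh; apply; exists b => //.
rewrite -hlw; case: (shortenP hpw) => p' hp' hu hsub.
exists p'; split; first by [].
move: hb; apply: contra; rewrite !inE => /orP[->//|/hsub ->]; by rewrite orbT.
Qed.

Lemma sorted_of_gt (T : finType) (e : rel T) (n : nat) (iota : 'I_n -> T) (o : T)
  m0 p0 (g : seq T) :
  simple_path e (iota m0) o p0 ->
  (forall i j : nat, i < j -> j < size g ->
       ss_gt e iota o (nth o g i) (nth o g j)) ->
  sorted (fun x y => index x (iota m0 :: p0) < index y (iota m0 :: p0)) g.
Proof.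
move=> sp H; apply: pairwise_sorted; apply/(pairwiseP o) => i j hi hj hij.
by have [_ [_ ]] := H i j hij hj m0 p0 sp.
Qed.

Theorem lemma3p17 (T : finType) (e : rel T) (n : nat) (iota : 'I_n -> T) (o : T) :
  core_network e iota o ->
  exists! rho : seq T,
    (forall v : T, v \in rcons rho o <-> abs_super_simple e iota o v) /\
    (forall i j : nat, i < j -> j < size (rcons rho o) ->
       ss_gt e iota o (nth o (rcons rho o) i) (nth o (rcons rho o) j)).
Proof.
move=> core.
have [m0 _] : exists m : 'I_n, true by case: (core o) => _ [m _]; exists m.
have [p0 sp0] := exists_simple (proj1 (core (iota m0))).
set ASS := abs_super_simple e iota o.
pose asb v := if excluded_middle_informative (ASS v) then true else false.
have asbP v : asb v = true <-> ASS v.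
  by rewrite /asb; case: excluded_middle_informative.
have oASS : ASS o.
  move=> m p [_ [<- _]]; exact: mem_last.
have inP v : ASS v -> v \in iota m0 :: p0 by move=> h; exact: h m0 p0 sp0.
set P := iota m0 :: p0.
have uP : uniq P by case: sp0 => _ [].
pose f := filter asb P.
pose rho := filter asb (belast (iota m0) p0).
have hf : f = rcons rho o.
  rewrite /f /P lastI filter_rcons; case: sp0 => _ [-> _].
  by have /asbP -> := oASS.
have H1 : forall v, v \in f <-> ASS v.
  move=> v; rewrite mem_filter; split.
    by move=> /andP[/asbP].
  by move=> h; rewrite (inP v h) andbT; apply/asbP.
pose K := filter (preim (nth o P) asb) (seq.iota 0 (size P)).
have hfK : f = map (nth o P) K by rewrite /f -{1}(mkseq_nth o P) /mkseq filter_map.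
have sK : sorted ltn K by apply: sorted_filter; [exact: ltn_trans | exact: iota_ltn_sorted].
have Kin k : k \in K -> k < size P /\ ASS (nth o P k).
  rewrite mem_filter mem_iota add0n => /andP[/asbP h /andP[_ ->]]; by [].
have H2 : forall i j, i < j -> j < size f -> ss_gt e iota o (nth o f i) (nth o f j).
  move=> i j hij hj.
  have hi : i < size f by apply: ltn_trans hj.
  rewrite hfK size_map in hi hj.
  rewrite hfK !(nth_map 0) //.
  have lt : nth 0 K i < nth 0 K j by apply: (sorted_ltn_nth ltn_trans 0 sK).
  have [kIs aA] := Kin _ (mem_nth 0 hi).
  have [kJs bA] := Kin _ (mem_nth 0 hj).
  move: lt aA bA kIs kJs; set kI := nth 0 K i; set kJ := nth 0 K j.
  move=> lt aA bA kIs kJs.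
  set a := nth o P kI; set b := nth o P kJ.
  have iaP : index a P = kI by rewrite /a index_uniq.
  have ibP : index b P = kJ by rewrite /b index_uniq.
  move=> m p sp.
  have aQ := aA m p sp; have bQ := bA m p sp.
  split; first by []; split; first by [].
  rewrite ltnNge leq_eqVlt; apply/negP => /orP[/eqP heq|hlt].
    have : a = b by apply: (etrans (esym (nth_index o aQ))); rewrite -heq; exact: (nth_index o bQ).
    by move=> hab; move: lt; rewrite -iaP -ibP hab ltnn.
  have hP : index a P < index b P by rewrite iaP ibP.
  have [q [sq nb]] := walk sp0 sp (inP a aA) aQ bQ hP hlt.
  by move: nb; rewrite (bA m0 q sq).
exists rho; split.
  by rewrite -hf; split.
move=> rho' [G1 G2].
have s1 := sorted_of_gt sp0 H2.
have s2 := sorted_of_gt sp0 G2.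
have E : f = rcons rho' o.
  apply: (irr_sorted_eq _ _ s1 s2).
  - by move=> x y z; apply: ltn_trans.
  - by move=> x; rewrite /= ltnn.
  - by move=> v; apply/idP/idP => [/H1/G1|/G1/H1].
by move: E; rewrite hf => /rcons_inj [].
Qed.
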